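(* Let $\mathcal{D}=\mathrm{diag}(u_1,\dots,u_n)$ with all $u_j\neq0$, and let $\mathcal{N}=V_r^{-*}\mathcal{D}^*\mathcal{D}V_r^{-1}$. Then for all integers $\nu_1,\nu_2\ge0$ and every integer $k\ge1$, $$\rho\big(E_{\rm TG}^{\nu_1,\nu_2}(P_\sharp,R_\sharp)\big)=\big\|[E_{\rm TG}^{\nu_1,\nu_2}(P_\sharp,R_\sharp)]^k\big\|_{\mathcal N}^{1/k}=\big\|E_{\rm TG}^{\nu_1,\nu_2}(P_\sharp,R_\sharp)\big\|_{\mathcal N}=\begin{cases}|1-\lambda_{n_c+1}|^{\nu_1+\nu_2},& n_c<n,\\ 0,& n_c=n.\end{cases}$$
   Context: Let $A,M\in\mathbb{C}^{n\times n}$ be nonsingular with $M^{-1}A$ and $M^{-*}A^*$ diagonalizable. Let $V_r=[\bm v_{r,1},\dots,\bm v_{r,n}]$ and $V_l=[\bm v_{l,1},\dots,\bm v_{l,n}]$ be invertible matrices of right and left generalized eigenvectors of the pencil $(A,M)$, i.e. $AV_r=MV_r\Lambda$ and $V_l^*A=\Lambda V_l^*M$ with $\Lambda=\mathrm{diag}(\lambda_1,\dots,\lambda_n)$, chosen so that $V_l^*AV_r$ and $V_l^*MV_r$ are diagonal, and ordered so that $|1-\lambda_1|\ge\cdots\ge|1-\lambda_n|\ge0$. Fix $n_c\in\{1,\dots,n\}$. For $P,R\in\mathbb{C}^{n\times n_c}$ with $R^*AP$ invertible, $\Pi(P,R)=P(R^*AP)^{-1}R^*A$ and $E_{\rm TG}^{\nu_1,\nu_2}(P,R)=(I-M^{-1}A)^{\nu_2}(I-\Pi(P,R))(I-M^{-1}A)^{\nu_1}$.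 $P_\sharp,R_\sharp\in\mathbb{C}^{n\times n_c}$ are any matrices with $\mathrm{range}(P_\sharp)=\mathrm{span}\{\bm v_{r,1},\dots,\bm v_{r,n_c}\}$, $\mathrm{range}(R_\sharp)=\mathrm{span}\{\bm v_{l,1},\dots,\bm v_{l,n_c}\}$. For Hermitian positive definite $\mathcal N$, $\|x\|_{\mathcal N}=(x^*\mathcal Nx)^{1/2}$ and $\|Z\|_{\mathcal N}=\max_{x\neq0}\|Zx\|_{\mathcal N}/\|x\|_{\mathcal N}$; $\rho$ is the spectral radius. *)

(* Defs.v *)
From HB Require Import structures.
From mathcomp Require Import all_boot all_order all_algebra.
Set Implicit Arguments. Unset Strict Implicit. Unset Printing Implicit Defensive.
Import Order.TTheory GRing.Theory Num.Theory.
Local Open Scope ring_scope.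
Local Open Scope sesquilinear_scope.

(* Complex scalars: an arbitrary numClosedFieldType C (e.g. complex R for R : realType). *)

Definition vnormN {C : numClosedFieldType} n (N : 'M[C]_n) (x : 'cV[C]_n) : C :=
  sqrtC ((x ^t* *m N *m x) 0 0).

Definition is_opnormN {C : numClosedFieldType} n (N Z : 'M[C]_n) (c : C) : Prop :=
  (forall x : 'cV[C]_n, x != 0 -> vnormN N (Z *m x) / vnormN N x <= c) /\
  (exists2 x : 'cV[C]_n, x != 0 & vnormN N (Z *m x) / vnormN N x = c).

Definition is_specrad {C : numClosedFieldType} n (Z : 'M[C]_n) (r : C) : Prop :=
  (forall a, eigenvalue Z a -> `|a| <= r) /\ (exists2 a, eigenvalue Z a & `|a| = r).

Definition PiTG {C : numClosedFieldType} n nc (A : 'M[C]_n) (P R : 'M[C]_(n, nc)) : 'M[C]_n :=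
  P *m invmx (R ^t* *m A *m P) *m (R ^t* *m A).

Definition ETG {C : numClosedFieldType} n nc (A M : 'M[C]_n) (nu1 nu2 : nat)
  (P R : 'M[C]_(n, nc)) : 'M[C]_n :=
  (1%:M - invmx M *m A) ^+ nu2 *m (1%:M - PiTG A P R) *m (1%:M - invmx M *m A) ^+ nu1.

(* span{ v_1, ..., v_nc } where v_j is the j-th (0-indexed j < nc) column of V,
   represented as a row space (of the transposed columns) *)
Definition first_cols_span {C : numClosedFieldType} n (nc : nat) (V : 'M[C]_n) :=
  (\sum_(j < n | (j < nc)%N) <<row j V^T>>)%MS.

(* |1 - lambda_{nc+1}|^(nu) if nc < n (1-indexed lambda_{nc+1} = lam at 0-index nc),
   and 0 if nc = n *)
Definition tg_rate {C : numClosedFieldType} n (nc : nat) (lam : 'I_n -> C) (nu : nat) : C :=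
  match (insub nc : option 'I_n) with
  | Some i => `|1 - lam i| ^+ nu
  | None => 0
  end.

(* Main.v *)
Require Import Defs.
From HB Require Import structures.
From mathcomp Require Import all_boot all_order all_algebra.
Set Implicit Arguments. Unset Strict Implicit. Unset Printing Implicit Defensive.
Import Order.TTheory GRing.Theory Num.Theory.
Local Open Scope ring_scope.
Local Open Scope sesquilinear_scope.

Section Aux.
Variable C : numClosedFieldType.



Lemma row_pid_lt n nc (i : 'I_n) m (X : 'M[C]_(n, m)) : (i < nc)%N ->
  row i (pid_mx nc : 'M[C]_n) *m X = row i X.
Proof.
move=> h; have -> : row i (pid_mx nc : 'M[C]_n) = row i 1%:M.
  by apply/rowP => j; rewrite !mxE h andbT.
by rewrite -row_mul mul1mx.
Qed.

Lemma row_pid_ge n nc (i : 'I_n) : (nc <= i)%N ->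
  row i (pid_mx nc : 'M[C]_n) = 0.
Proof.
by move=> h; apply/rowP => j; rewrite !mxE ltnNge h andbF.
Qed.

Lemma span_facts n nc (V : 'M[C]_n) (P : 'M[C]_(n, nc)) :
  V \in unitmx -> (nc <= n)%N -> (P^T == first_cols_span nc V)%MS ->
  [/\ pid_mx nc *m (invmx V *m P) = invmx V *m P,
      (forall j : 'I_n, (j < nc)%N -> exists y : 'cV[C]_nc, invmx V *m P *m y = delta_mx j 0)
    & (forall z : 'cV[C]_nc, P *m z = 0 -> z = 0)].
Proof.
move=> Vu ncn HP.
have eqF : (first_cols_span nc V == (pid_mx nc : 'M[C]_n) *m V^T)%MS.
  idtac.
  apply/andP; split.
    apply/sumsmx_subP => j jlt; rewrite genmxE.
    rewrite -(row_pid_lt V^T jlt) -row_mul; exact: row_sub.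
  apply/row_subP => i; rewrite row_mul.
  case: (ltnP i nc) => h.
    rewrite row_pid_lt //; apply: (sumsmx_sup i) => //; rewrite genmxE; exact: submx_refl.
  by rewrite row_pid_ge // mul0mx sub0mx.
have [HP1 HP2] := andP HP; have [F1 F2] := andP eqF.
have PF : (P^T == (pid_mx nc : 'M[C]_n) *m V^T)%MS.
  by apply/andP; split; [apply: submx_trans F1 | apply: submx_trans HP2].
have [PF1 PF2] := andP PF.
split.
- have [D hD] := submxP PF1.
  have hP : P = V *m ((pid_mx nc : 'M[C]_n) *m D^T).
    by rewrite -[P]trmxK hD !trmx_mul trmxK tr_pid_mx mulmxA.
  by rewrite hP mulKmx // mulmxA pid_mx_id.
- move=> j jlt.
  have : (row j V^T <= P^T)%MS.
    apply: submx_trans HP2; apply: (sumsmx_sup j) => //; rewrite genmxE; exact: submx_refl.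
  case/submxP => z hz; exists z^T.
  have hc : col j V = P *m z^T by rewrite -[col j V]trmxK tr_col hz trmx_mul trmxK.
  by rewrite -mulmxA -hc colE mulKmx.
- move=> z hz.
  have rf : row_free P^T.
    by rewrite /row_free (eqmx_rank PF) mxrankMfree ?row_free_unit ?unitmx_tr // rank_pid_mx.
  apply: trmx_inj; rewrite trmx0; apply: (row_free_inj rf).
  by rewrite mul0mx -trmx_mul hz trmx0.
Qed.


Lemma diag_delta n (G : 'M[C]_n) j : is_diag_mx G -> G *m (delta_mx j 0 : 'cV[C]_n) = G j j *: delta_mx j 0.
Proof.
move/is_diag_mxP=> dG; apply/matrixP => i k; rewrite -colE !mxE [k]ord1 eqxx andbT.
case: (eqVneq i j) => [->|ne]; first by rewrite mulr1.
by rewrite dG ?mulr0.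
Qed.

Lemma diag_deltaT n (G : 'M[C]_n) j : is_diag_mx G -> (delta_mx 0 j : 'rV[C]_n) *m G = G j j *: delta_mx 0 j.
Proof.
move/is_diag_mxP=> dG; apply/matrixP => k i; rewrite -rowE !mxE [k]ord1 eqxx /=.
case: (eqVneq j i) => [->|ne]; first by rewrite mulr1.
by rewrite dG ?mulr0.
Qed.

Lemma conjT_mul m n p (A : 'M[C]_(m, n)) (B : 'M[C]_(n, p)) : (A *m B)^t* = B^t* *m A^t*.
Proof. by rewrite trmx_mul map_mxM. Qed.

Lemma pid_conjT n nc : (pid_mx nc : 'M[C]_n)^t* = pid_mx nc.
Proof. by rewrite tr_pid_mx map_pid_mx. Qed.

Lemma pid_delta n nc (j : 'I_n) : (pid_mx nc : 'M[C]_n) *m (delta_mx j 0 : 'cV[C]_n) = if (j < nc)%N then delta_mx j 0 else 0.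
Proof.
apply/matrixP => i k; rewrite -colE !mxE [k]ord1.
case: (eqVneq (i : nat) j) => [/val_inj ->|ne]; case: ifP => h; rewrite !mxE ?eqxx ?h //=.
all: by move: ne; rewrite -[i == j]/((i : nat) == j) => /negbTE ->.
Qed.

Lemma inj_unit m (B : 'M[C]_m) : (forall z : 'cV[C]_m, B *m z = 0 -> z = 0) -> B \in unitmx.
Proof.
move=> H; rewrite -unitmx_tr -row_free_unit -kermx_eq0; apply/eqP/row_matrixP => i.
rewrite row0; apply: trmx_inj; rewrite trmx0; apply: H.
have := mulmx_ker B^T; move/(congr1 (row i)); rewrite row_mul row0 => /(congr1 trmx).
by rewrite trmx_mul trmxK trmx0.
Qed.

Lemma Pi_conj n nc (A Vr Vl : 'M[C]_n) (P R : 'M[C]_(n, nc)) :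
  A \in unitmx -> Vr \in unitmx -> Vl \in unitmx ->
  is_diag_mx (Vl ^t* *m A *m Vr) -> (nc <= n)%N ->
  (P^T == first_cols_span nc Vr)%MS -> (R^T == first_cols_span nc Vl)%MS ->
  PiTG A P R = Vr *m pid_mx nc *m invmx Vr.
Proof.
move=> Au Vru Vlu Gd ncn HP HR.
have [S1 S2 S3] := span_facts Vru ncn HP.
have [T1 T2 T3] := span_facts Vlu ncn HR.
set S := invmx Vr *m P in S1 S2; set T := invmx Vl *m R in T1 T2.
set G := Vl ^t* *m A *m Vr in Gd.
have hP : P = Vr *m S by rewrite /S mulKVmx.
have hR : R = Vl *m T by rewrite /T mulKVmx.
have Gu : G \in unitmx by rewrite /G !unitmx_mul map_unitmx unitmx_tr Vlu Au Vru.
have Gjj : forall j, G j j != 0.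
  move=> j; apply/eqP => h.
  have : G *m (delta_mx j 0 : 'cV[C]_n) = 0 by rewrite diag_delta // h scale0r.
  move/(congr1 (mulmx (invmx G))); rewrite mulKmx // mulmx0 => /matrixP/(_ j 0).
  by rewrite !mxE !eqxx /= => /eqP; rewrite oner_eq0.
have hRA : R ^t* *m A = T ^t* *m G *m invmx Vr.
  by rewrite hR conjT_mul /G -!mulmxA mulmxV // mulmx1.
clearbody S T G.
set K0 := R ^t* *m A *m P.
have hK0 : K0 = T ^t* *m G *m S by rewrite /K0 hRA hP !mulmxA mulmxKV.
have K0u : K0 \in unitmx.
  apply: inj_unit => z; rewrite hK0 -mulmxA => h0.
  set w := S *m z in h0.
  have wE : w = 0.
    apply/row_matrixP => i; rewrite row0.
    case: (ltnP i nc) => hi.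
      have [y hy] := T2 i hi.
      have := congr1 (mulmx (y ^t*)) h0; rewrite mulmx0 mulmxA mulmxA -conjT_mul hy.
      have -> : (delta_mx i 0 : 'cV[C]_n) ^t* = delta_mx 0 i by rewrite trmx_delta map_delta_mx.
      rewrite diag_deltaT // -scalemxAl -rowE => /eqP; rewrite scaler_eq0 (negbTE (Gjj i)) /=.
      by move/eqP.
    by rewrite /w -S1 !row_mul row_pid_ge // !mul0mx.
  apply: S3; by rewrite hP -mulmxA -/w wE mulmx0.
rewrite /PiTG -/K0 hRA hP.
have -> : Vr *m S *m invmx K0 *m (T ^t* *m G *m invmx Vr) = Vr *m (S *m invmx K0 *m (T ^t* *m G)) *m invmx Vr by rewrite !mulmxA.
congr (_ *m _ *m _).
apply/matrixP => i j.
suff hc : S *m invmx K0 *m (T ^t* *m G) *m (delta_mx j 0 : 'cV[C]_n) = pid_mx nc *m delta_mx j 0.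
  by have := congr1 (fun M : 'cV[C]_n => M i 0) hc; rewrite -!colE !mxE.
rewrite pid_delta; case: ifP => hj.
  have [y hy] := S2 j hj.
  have XS : S *m invmx K0 *m (T ^t* *m G) *m S = S.
    by rewrite -mulmxA -hK0 -mulmxA mulVmx // mulmx1.
  by rewrite -hy mulmxA XS.
rewrite -!mulmxA diag_delta //.
have -> : T ^t* = T^t* *m (pid_mx nc : 'M[C]_n) by rewrite -{1}T1 conjT_mul pid_conjT.
by rewrite -!scalemxAr -mulmxA pid_delta hj !mulmx0 scaler0.
Qed.

Lemma conj_pow n (V X : 'M[C]_n) k : V \in unitmx ->
  (V *m X *m invmx V) ^+ k = V *m X ^+ k *m invmx V.
Proof.
move=> Vu; elim: k => [|k IH].
  by rewrite !expr0 -[1]/(1%:M : 'M[C]_n) mulmx1 mulmxV.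
by rewrite !exprS IH -!mulmxE !mulmxA mulmxKV.
Qed.

Lemma diag_pow n (d : 'rV[C]_n) k : (diag_mx d) ^+ k = diag_mx (\row_j d 0 j ^+ k).
Proof.
elim: k => [|k IH].
  rewrite expr0 -[1]/(1%:M : 'M[C]_n); apply/matrixP => i j; rewrite !mxE expr0 //.
by rewrite exprS IH -mulmxE mulmx_diag; congr diag_mx; apply/rowP => j; rewrite !mxE exprS.
Qed.

Lemma E_conj n nc (A M Vr Vl : 'M[C]_n) (lam : 'I_n -> C) (P R : 'M[C]_(n, nc)) nu1 nu2 :
  A \in unitmx -> M \in unitmx -> Vr \in unitmx -> Vl \in unitmx ->
  A *m Vr = M *m Vr *m diag_mx (\row_i lam i) ->
  is_diag_mx (Vl ^t* *m A *m Vr) -> (nc <= n)%N ->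
  (P^T == first_cols_span nc Vr)%MS -> (R^T == first_cols_span nc Vl)%MS ->
  ETG A M nu1 nu2 P R =
  Vr *m diag_mx (\row_i ((1 - lam i) ^+ nu2 * (nc <= i)%:R * (1 - lam i) ^+ nu1)) *m invmx Vr.
Proof.
move=> Au Mu Vru Vlu hAV Gd ncn HP HR.
have hMA : invmx M *m A = Vr *m diag_mx (\row_i lam i) *m invmx Vr.
  by rewrite -[A](mulmxK Vru) hAV !mulmxA mulVmx // mul1mx.
have h1 : forall X, 1%:M - Vr *m X *m invmx Vr = Vr *m (1%:M - X) *m invmx Vr.
  by move=> X; rewrite mulmxBr mulmxBl mulmx1 mulmxV.
rewrite /ETG hMA (Pi_conj Au Vru Vlu Gd ncn HP HR) !h1 !conj_pow //.
rewrite !mulmxA !mulmxKV //.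
have -> : 1%:M - diag_mx (\row_i lam i) = diag_mx (\row_i (1 - lam i)).
  by apply/matrixP => i j; rewrite !mxE; case: (i == j); rewrite ?mulr1n ?mulr0n ?subr0.
have -> : 1%:M - (pid_mx nc : 'M[C]_n) = diag_mx (\row_i ((nc <= i)%:R : C)).
  apply/matrixP => i j; rewrite !mxE.
  case: (eqVneq (i : nat) j) => [/val_inj ->|ne].
    rewrite eqxx andTb mulr1n; case: ltnP => h; rewrite ?subrr ?subr0 //.
  by rewrite -[i == j]/((i : nat) == j) (negbTE ne) /= mulr0n subr0.
rewrite !diag_pow; congr (_ *m _); rewrite -!mulmxA; congr (_ *m _).
rewrite !mulmx_diag; congr diag_mx; apply/rowP => i; rewrite !mxE mulrA.
by [].
Qed.

Lemma specrad_diag n (V : 'M[C]_n) (e : 'I_n -> C) (r : C) (i0 : 'I_n) :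
  V \in unitmx -> (forall i, `|e i| <= r) -> `|e i0| = r ->
  is_specrad (V *m diag_mx (\row_i e i) *m invmx V) r.
Proof.
move=> Vu hle hi0; split.
  move=> a /eigenvalueP [v hv vnz].
  set w := v *m V.
  have hw : w *m diag_mx (\row_i e i) = a *: w.
    have -> : w *m diag_mx (\row_i e i) = v *m (V *m diag_mx (\row_i e i) *m invmx V) *m V.
      by rewrite /w !mulmxA mulmxKV.
    by rewrite hv -scalemxAl.
  have hwdef : w = v *m V by [].
  clearbody w.
  case: (pickP (fun i => w 0 i != 0)) => [i hi | h].
    have := congr1 (fun M : 'rV[C]_n => M 0 i) hw; rewrite mul_mx_diag !mxE /=.
    move/eqP; rewrite mulrC -subr_eq0 -mulrBl mulf_eq0 (negbTE hi) orbF subr_eq0 => /eqP <-.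
    exact: hle.
  have w0 : w = 0 by apply/rowP => i; rewrite mxE; have := h i; move/negbFE/eqP.
  by move: vnz; rewrite -[v](mulmxK Vu) -hwdef w0 mul0mx eqxx.
exists (e i0) => //.
apply/eigenvalueP; exists (delta_mx 0 i0 *m invmx V).
  by rewrite !mulmxA mulmxKV // -[delta_mx 0 i0 *m diag_mx _]rowE row_diag_mx !mxE -scalemxAl.
apply/eqP => h0.
have := congr1 (mulmx^~ V) h0; rewrite mulmxKV // mul0mx => /rowP/(_ i0).
by rewrite !mxE !eqxx /= => /eqP; rewrite oner_eq0.
Qed.

Lemma vnorm_eq n (V : 'M[C]_n) (u : 'I_n -> C) (x : 'cV[C]_n) :
  vnormN (invmx V ^t* *m diag_mx (\row_j u j) ^t* *m diag_mx (\row_j u j) *m invmx V) x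
  = sqrtC (\sum_i `|(diag_mx (\row_j u j) *m invmx V *m x) i 0| ^+ 2).
Proof.
rewrite /vnormN; congr sqrtC.
set y := diag_mx (\row_j u j) *m invmx V *m x.
have -> : x ^t* *m (invmx V ^t* *m diag_mx (\row_j u j) ^t* *m diag_mx (\row_j u j) *m invmx V) *m x
  = y ^t* *m y by rewrite /y !conjT_mul !mulmxA.
by rewrite mxE; apply: eq_bigr => i _; rewrite !mxE normCKC.
Qed.

Lemma sum_delta n (i0 : 'I_n) (c : C) :
  \sum_i `|(c *: (delta_mx i0 0 : 'cV[C]_n)) i 0| ^+ 2 = `|c| ^+ 2.
Proof.
rewrite (bigD1 i0) //= big1 ?addr0; first by rewrite !mxE !eqxx mulr1.
by move=> i hi; rewrite !mxE (negbTE hi) mulr0 normr0 expr0n.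
Qed.

Lemma opnorm_diag n (V : 'M[C]_n) (u e : 'I_n -> C) (r : C) (i0 : 'I_n) :
  V \in unitmx -> (forall j, u j != 0) -> (forall i, `|e i| <= r) -> `|e i0| = r ->
  is_opnormN (invmx V ^t* *m diag_mx (\row_j u j) ^t* *m diag_mx (\row_j u j) *m invmx V)
             (V *m diag_mx (\row_i e i) *m invmx V) r.
Proof.
move=> Vu unz hle hi0.
have r0 : 0 <= r by rewrite -hi0 normr_ge0.
set D := diag_mx (\row_j u j); set De := diag_mx (\row_i e i).
have key : forall x : 'cV[C]_n, D *m invmx V *m (V *m De *m invmx V *m x) = De *m (D *m invmx V *m x).
  move=> x; rewrite !mulmxA mulmxKV // /D /De !mulmx_diag.
  by congr (diag_mx _ *m _ *m _); apply/rowP => i; rewrite !mxE mulrC.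
have ent : forall (y : 'cV[C]_n) i, (De *m y) i 0 = e i * y i 0.
  by move=> y i; rewrite /De mul_diag_mx !mxE.
split.
  move=> x xnz; rewrite !vnorm_eq -/D key.
  set y := D *m invmx V *m x.
  have ynz : y != 0.
    apply: contra xnz => /eqP y0; apply/eqP.
    have wx : invmx V *m x = 0.
      apply/matrixP => i k; rewrite [k]ord1.
      have := congr1 (fun M : 'cV[C]_n => M i 0) y0; rewrite /y -mulmxA /D mul_diag_mx !mxE.
      by move/eqP; rewrite mulf_eq0 (negbTE (unz i)) /= => /eqP.
    by rewrite -[x](mulKVmx Vu) wx mulmx0.
  clearbody y.
  set S := \sum_i `|y i 0| ^+ 2.
  have S0 : 0 <= S by apply: sumr_ge0 => i _; rewrite exprn_ge0.
  have Spos : 0 < S.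
    rewrite lt_def S0 andbT; apply: contra ynz => /eqP hS; apply/eqP/matrixP => i k.
    rewrite [k]ord1 mxE.
    have hi : `|y i 0| ^+ 2 = 0 by apply: (psumr_eq0P _ hS) => // l _; rewrite exprn_ge0.
    by move/eqP: hi; rewrite expf_eq0 /= normr_eq0 => /eqP.
  rewrite ler_pdivrMr ?sqrtC_gt0 // -{1}(sqrCK r0) -sqrtCM ?nnegrE ?exprn_ge0 //.
  rewrite ler_sqrtC ?nnegrE ?exprn_ge0 ?mulr_ge0 ?sumr_ge0 //; last 2 first.
    by move=> i _; rewrite exprn_ge0.
    by move=> i _; rewrite exprn_ge0.
  rewrite /S mulr_sumr; apply: ler_sum => i _; rewrite ent normrM exprMn.
  by apply: ler_wpM2r; rewrite ?exprn_ge0 // lerXn2r ?nnegrE.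
exists (V *m delta_mx i0 0).
  apply/eqP => h0; have := congr1 (mulmx (invmx V)) h0; rewrite mulKmx // mulmx0.
  by move/matrixP/(_ i0 0); rewrite !mxE !eqxx /= => /eqP; rewrite oner_eq0.
rewrite !vnorm_eq -/D key.
have -> : D *m invmx V *m (V *m (delta_mx i0 0 : 'cV[C]_n)) = D *m delta_mx i0 0.
  by rewrite mulmxA mulmxKV.
have hD : D *m (delta_mx i0 0 : 'cV[C]_n) = u i0 *: delta_mx i0 0.
  by rewrite diag_delta ?diag_mx_is_diag // /D !mxE eqxx mulr1n.
have hDe : De *m (delta_mx i0 0 : 'cV[C]_n) = e i0 *: delta_mx i0 0.
  by rewrite diag_delta ?diag_mx_is_diag // /De !mxE eqxx mulr1n.
rewrite hD -scalemxAr hDe scalerA !sum_delta normrM.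
rewrite !sqrCK ?mulr_ge0 ?normr_ge0 // [`|u i0| * _]mulrC mulfK ?normr_eq0 //.
Qed.
End Aux.

Unset Implicit Arguments.
Set Strict Implicit.

Theorem theorem3p3 (C : numClosedFieldType) (n nc : nat)
  (A M Vr Vl : 'M[C]_n) (lam : 'I_n -> C) (u : 'I_n -> C)
  (Psh Rsh : 'M[C]_(n, nc)) :
  A \in unitmx -> M \in unitmx ->
  diagonalizable (invmx M *m A) ->
  diagonalizable (invmx (M ^t*) *m A ^t*) ->
  Vr \in unitmx -> Vl \in unitmx ->
  A *m Vr = M *m Vr *m diag_mx (\row_i lam i) ->
  Vl ^t* *m A = diag_mx (\row_i lam i) *m Vl ^t* *m M ->
  is_diag_mx (Vl ^t* *m A *m Vr) ->
  is_diag_mx (Vl ^t* *m M *m Vr) ->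
  (forall i j : 'I_n, (i <= j)%N -> `|1 - lam j| <= `|1 - lam i|) ->
  (1 <= nc <= n)%N ->
  (Psh^T == first_cols_span nc Vr)%MS ->
  (Rsh^T == first_cols_span nc Vl)%MS ->
  (forall j, u j != 0) ->
  let D := diag_mx (\row_j u j) in
  let N := (invmx Vr) ^t* *m D ^t* *m D *m invmx Vr in
  forall nu1 nu2 : nat,
  let E := ETG A M nu1 nu2 Psh Rsh in
  let v := tg_rate nc lam (nu1 + nu2) in
  [/\ is_specrad E v,
      (forall k : nat, (1 <= k)%N ->
         exists2 c : C, is_opnormN N (E ^+ k) c & k.-root c = v)
    & is_opnormN N E v].
Proof.
move=> Au Mu _ _ Vru Vlu hAV _ Gd _ hmono /andP[nc1 ncn] HP HR unz D N nu1 nu2 E v.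
pose d := fun i : 'I_n => (1 - lam i) ^+ nu2 * (nc <= i)%:R * (1 - lam i) ^+ nu1.
have hE : E = Vr *m diag_mx (\row_i d i) *m invmx Vr.
  exact: (E_conj nu1 nu2 Au Mu Vru Vlu hAV Gd ncn HP HR).
have hd : forall i, `|d i| = if (nc <= i)%N then `|1 - lam i| ^+ (nu1 + nu2) else 0.
  move=> i; rewrite /d !normrM normr_nat; case: (nc <= i)%N.
    by rewrite mulr1 !normrX -exprD addnC.
  by rewrite mulr0 mul0r.
have [i0 hle hi0] : exists2 i0, (forall i, `|d i| <= v) & `|d i0| = v.
  rewrite /v /tg_rate; case: insubP => [i1 hlt hval | hn].
    exists i1; last by rewrite hd hval leqnn.
    move=> i; rewrite hd; case: ifP => h.
      apply: lerXn2r; rewrite ?nnegrE ?normr_ge0 //; apply: hmono; by rewrite hval.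
    by rewrite exprn_ge0 ?normr_ge0.
  have n0 : (0 < n)%N by apply: leq_trans nc1 ncn.
  have hin : forall i : 'I_n, ~~ (nc <= i)%N.
    by move=> i; rewrite -ltnNge; apply: leq_trans (ltn_ord i) _; rewrite leqNgt.
  exists (Ordinal n0) => [i|]; by rewrite hd (negbTE (hin _)).
have v0 : 0 <= v by rewrite -hi0 normr_ge0.
split.
- by rewrite hE; apply: (specrad_diag (i0 := i0)) => // i; rewrite mxE.
- move=> k k1; exists (v ^+ k); last by rewrite exprCK.
  rewrite hE conj_pow // diag_pow; apply: (opnorm_diag (i0 := i0)) => // [i|].
    by rewrite mxE normrX lerXn2r ?nnegrE ?normr_ge0.
  by rewrite mxE normrX hi0.
- by rewrite hE; apply: (opnorm_diag (i0 := i0)) => // i; rewrite mxE.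
Qed.
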